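(* Define, for $n\ge 0$, $$d_n(q)=\sum_{\pi\in \mathcal I^C_{2n}(321)}q^{\mathrm{des}^+(\pi)},\qquad p_n(q)=\sum_{\pi\in \mathcal I^C_{2n}(321)}q^{\mathrm{maj}^+(\pi)}$$ (with $\mathcal I^C_0(321)$ consisting of the empty permutation). Then for $n\ge 2$, $$d_n(q)=2d_{n-1}(q)+(q-1)d_{n-2}(q),\qquad p_n(q)=(1+q)p_{n-1}(q)+(q^n-q)p_{n-2}(q).$$
   Context: A permutation $\pi\in\mathcal S_m$ is centrosymmetric if $\pi(i)+\pi(m+1-i)=m+1$ for all $i$; $\mathcal I^C_m(321)$ is the set of centrosymmetric involutions in $\mathcal S_m$ avoiding $321$. For $\pi\in\mathcal S_{2n}$, $\mathrm{Des}^+(\pi)$ is the set of positions $i\in\{1,\dots,n\}$ with $\pi(i)>\pi(i+1)$, $\mathrm{des}^+(\pi)=|\mathrm{Des}^+(\pi)|$ and $\mathrm{maj}^+(\pi)=\sum_{i\in\mathrm{Des}^+(\pi)}i$. *)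

(* Defs.v *)
From HB Require Import structures.
From mathcomp Require Import all_boot all_order all_algebra all_fingroup.
Set Implicit Arguments. Unset Strict Implicit. Unset Printing Implicit Defensive.
Import GRing.Theory.

(* Positions are 0-indexed: paper position i (1-based) is ordinal i-1. *)

Definition centrosymmetric (m : nat) (s : {perm 'I_m}) : bool :=
  [forall i, (s i : nat) + s (rev_ord i) == m.-1].

Definition involution (m : nat) (s : {perm 'I_m}) : bool :=
  [forall i, s (s i) == i].

Definition avoids321 (m : nat) (s : {perm 'I_m}) : bool :=
  ~~ [exists i : 'I_m, exists j : 'I_m, exists k : 'I_m,
        [&& i < j, j < k, s j < s i & s k < s j]].

Definition ICinv321 (m : nat) : {set {perm 'I_m}} :=
  [set s | [&& centrosymmetric s, involution s & avoids321 s]].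

(* Des^+(s) for s in S_{2n}: positions i in {1..n} (1-based) with s(i) > s(i+1).
   We return the 1-based positions. *)
Definition DesPlus (n : nat) (s : {perm 'I_(n.*2)}) : seq nat :=
  [seq i <- iota 1 n |
     [exists a : 'I_(n.*2), exists b : 'I_(n.*2),
        [&& (a : nat) == i.-1, (b : nat) == i & s b < s a]]].

Definition desPlus (n : nat) (s : {perm 'I_(n.*2)}) : nat := size (DesPlus s).
Definition majPlus (n : nat) (s : {perm 'I_(n.*2)}) : nat := \sum_(i <- DesPlus s) i.

Definition d_poly (n : nat) : {poly int} :=
  \sum_(s in ICinv321 n.*2) 'X^(desPlus s).

Definition p_poly (n : nat) : {poly int} :=
  \sum_(s in ICinv321 n.*2) 'X^(majPlus s).

(* Main.v *)
Require Import Defs.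
From HB Require Import structures.
From mathcomp Require Import all_boot all_order all_algebra all_fingroup.
From mathcomp Require Import zify ring.
Import GRing.Theory.


Inductive step := U | D | F.
Definition eqs (a b : step) := match a, b with U,U | D,D | F,F => true | _,_ => false end.
Lemma eqsP : Equality.axiom eqs. Proof. by case; case; constructor. Qed.
HB.instance Definition _ := hasDecEq.Build step eqsP.

Definition flip x := match x with U => D | D => U | F => F end.

Definition cnt (W : nat -> step) (x : step) (c : nat) :=
  count (fun j => W j == x) (iota 0 c).

Lemma cntS W x c : cnt W x c.+1 = cnt W x c + (W c == x).
Proof. by rewrite /cnt -addn1 iotaD count_cat /= addn0. Qed.

Lemma cnt0 W x : cnt W x 0 = 0. Proof. by []. Qed.

Lemma cnt_mono W x a b : a <= b -> cnt W x a <= cnt W x b.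
Proof. move=> /subnKC <-; rewrite /cnt iotaD count_cat; exact: leq_addr. Qed.

Lemma cnt_lt W x a b : a < b -> W a = x -> cnt W x a < cnt W x b.
Proof.
move=> ab Wa; apply: (leq_trans _ (cnt_mono W x _ _ ab)).
by rewrite cntS Wa eqxx addn1.
Qed.

Lemma cnt_ext W W' x c : (forall j, j < c -> W j = W' j) -> cnt W x c = cnt W' x c.
Proof.
move=> h; apply: eq_in_count => j; rewrite mem_iota add0n => /andP[_ hj].
by rewrite h.
Qed.

Definition hvalid (u : seq step) :=
  all (fun c => cnt (nth F u) D c <= cnt (nth F u) U c) (iota 0 (size u).+1) &&
  all (fun j => (nth F u j != F) || (cnt (nth F u) U j == cnt (nth F u) D j))
      (iota 0 (size u)).

Definition ext2 u := if cnt (nth F u) U (size u) == cnt (nth F u) D (size u) then F else D.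
Definition ext (u : seq step) := [:: U; ext2 u].

Fixpoint words n :=
  if n is n'.+1 then [seq rcons u x | u <- words n', x <- ext u] else [:: [::]].

Lemma nth_rcons_lt (u : seq step) x j : j < size u -> nth F (rcons u x) j = nth F u j.
Proof. by move=> h; rewrite nth_rcons h. Qed.

Lemma cnt_rcons (u : seq step) x y c : c <= size u ->
  cnt (nth F (rcons u x)) y c = cnt (nth F u) y c.
Proof. move=> h; apply: cnt_ext => j hj; apply: nth_rcons_lt; exact: leq_trans hj h. Qed.

Lemma hvalid_rcons u x :
  hvalid (rcons u x) = hvalid u && (x \in ext u).
Proof.
rewrite /hvalid size_rcons.
have -> : iota 0 (size u).+2 = iota 0 (size u).+1 ++ [:: (size u).+1].
  by rewrite -addn1 iotaD.
have -> : iota 0 (size u).+1 = iota 0 (size u) ++ [:: size u].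
  by rewrite -addn1 iotaD.
rewrite !all_cat /=.
have A1 : all (fun c => cnt (nth F (rcons u x)) D c <= cnt (nth F (rcons u x)) U c) (iota 0 (size u)) =
          all (fun c => cnt (nth F u) D c <= cnt (nth F u) U c) (iota 0 (size u)).
  apply: eq_in_all => c; rewrite mem_iota add0n => hc.
  by rewrite !cnt_rcons // ltnW.
have A2 : all (fun j => (nth F (rcons u x) j != F) || (cnt (nth F (rcons u x)) U j == cnt (nth F (rcons u x)) D j)) (iota 0 (size u)) =
          all (fun j => (nth F u j != F) || (cnt (nth F u) U j == cnt (nth F u) D j)) (iota 0 (size u)).
  apply: eq_in_all => j; rewrite mem_iota add0n => hj.
  by rewrite nth_rcons_lt // !cnt_rcons // ltnW.
rewrite A1 A2 !cntS !cnt_rcons // nth_rcons ltnn eqxx !andbT.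
set a := cnt (nth F u) D (size u); set b := cnt (nth F u) U (size u).
rewrite /ext /ext2 !inE -/a -/b.
case: (all _ _) => //=; case: (all _ _) => //=; rewrite ?andbF //.
case: (leqP a b) => hab //=.
clear A1 A2; case: x => /=; case: (b =P a) => hb //=; rewrite ?addn0 ?addn1 ?andbT ?andbF //.
all: rewrite /= ?hb; first [ by apply/idP; lia | by apply/negbTE; rewrite -?leqNgt -?ltnNge; lia | by apply/idP; rewrite ltn_neqAle hab andbT eq_sym; apply/eqP | idtac ].
Qed.

Lemma hvalid_nil : hvalid [::]. Proof. by []. Qed.

Lemma wordsS n : words n.+1 = [seq rcons u x | u <- words n, x <- ext u].
Proof. by []. Qed.

Lemma mem_words n u : (u \in words n) = (size u == n) && hvalid u.
Proof.
elim: n u => [|n IH] u.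
  by rewrite inE; case: u.
rewrite wordsS.
case/lastP: u => [|v x].
  apply/negbTE/negP => /allpairsPdep [w [y [_ _ e]]].
  by have := congr1 size e; rewrite size_rcons.
rewrite size_rcons eqSS hvalid_rcons andbA.
apply/allpairsPdep/idP.
  case=> [w [y [hw hy /rcons_inj [-> ->]]]].
  by rewrite -IH hw.
move=> /andP[hv hx]; exists v, x; split => //.
by rewrite IH.
Qed.

Lemma uniq_words n : uniq (words n).
Proof.
elim: n => // n IH; rewrite wordsS; apply: allpairs_uniq_dep => //.
  by move=> u _; rewrite /ext /ext2 /=; case: ifP.
move=> [u1 x1] [u2 x2] _ _ /= /rcons_inj [-> ->] //.
Qed.

Definition lastU (u : seq step) := last F u == U.
Definition inn u := [seq i <- iota 1 (size u).-1 |
  (nth F u i.-1 == U) && (nth F u i == D)].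
Definition dp u i := (nth F u i.-1 == U) && ((i == size u) || (nth F u i == D)).
Definition wdset u := [seq i <- iota 1 (size u) | dp u i].
Definition wdes u := size (wdset u).
Definition wmaj u := \sum_(i <- wdset u) i.

Lemma lastU_rcons u x : lastU (rcons u x) = (x == U).
Proof. by rewrite /lastU last_rcons. Qed.

Lemma wdset_split u : wdset u = inn u ++ (if lastU u then [:: size u] else [::]).
Proof.
case/lastP: u => [|v x] //.
rewrite /wdset /inn size_rcons succnK.
have -> : iota 1 (size v).+1 = iota 1 (size v) ++ [:: (size v).+1].
  by rewrite -[(size v).+1]addn1 iotaD add1n addn1.
rewrite filter_cat lastU_rcons.
congr (_ ++ _).
  apply: eq_in_filter => i; rewrite mem_iota => /andP[h1 h2].
  rewrite /dp size_rcons; have -> : (i == (size v).+1) = false.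
    by apply/negbTE/eqP; lia.
  by [].
rewrite /= /dp size_rcons eqxx orTb andbT succnK nth_rcons ltnn eqxx.
by case: (x == U).
Qed.

Lemma inn_rcons u x :
  inn (rcons u x) = inn u ++ (if lastU u && (x == D) then [:: size u] else [::]).
Proof.
case/lastP: u => [|v y] //.
rewrite /inn !size_rcons !succnK.
have -> : iota 1 (size v).+1 = iota 1 (size v) ++ [:: (size v).+1].
  by rewrite -[(size v).+1]addn1 iotaD add1n addn1.
rewrite filter_cat lastU_rcons.
congr (_ ++ _).
  apply: eq_in_filter => i; rewrite mem_iota => /andP[h1 h2].
  rewrite !nth_rcons !size_rcons.
  have h3 : i < (size v).+1 by lia.
  have h4 : i.-1 < (size v).+1 by lia.
  by rewrite h3 h4.
rewrite /= !nth_rcons !size_rcons ltnSn ltnn !eqxx.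
have -> : ((size v).+1 < size v) = false by lia.
by rewrite ltnn.
Qed.

Lemma wdes_E u : wdes u = size (inn u) + lastU u.
Proof. by rewrite /wdes wdset_split size_cat; case: (lastU u). Qed.

Lemma wmaj_E u : wmaj u = \sum_(i <- inn u) i + lastU u * size u.
Proof.
rewrite /wmaj wdset_split big_cat /=; case: (lastU u) => /=.
  by rewrite big_seq1 mul1n.
by rewrite big_nil.
Qed.

Lemma sinn_rcons u x : size (inn (rcons u x)) = size (inn u) + (lastU u && (x == D)).
Proof. by rewrite inn_rcons size_cat; case: (_ && _). Qed.

Lemma minn_rcons u x :
  \sum_(i <- inn (rcons u x)) i = \sum_(i <- inn u) i + (lastU u && (x == D)) * size u.
Proof.
rewrite inn_rcons big_cat /=; case: (_ && _) => /=.
  by rewrite big_seq1 mul1n.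
by rewrite big_nil.
Qed.

Lemma extE u : ext u = [:: U; ext2 u]. Proof. by []. Qed.
Lemma ext2_neq u : (ext2 u == U) = false. Proof. by rewrite /ext2; case: ifP. Qed.

Lemma hvalid_le u : hvalid u -> cnt (nth F u) D (size u) <= cnt (nth F u) U (size u).
Proof.
case/andP => /allP h _; apply: h; by rewrite mem_iota add0n ltnSn.
Qed.

Lemma ext2_lastU u : hvalid u -> lastU u -> ext2 u = D.
Proof.
case/lastP: u => [|v x] //; rewrite lastU_rcons hvalid_rcons => /andP[hv _] /eqP ->.
rewrite /ext2 size_rcons !cntS !cnt_rcons // nth_rcons ltnn eqxx /=.
have := hvalid_le _ hv; set a := cnt _ D _; set b := cnt _ U _ => hab.
by case: eqP => //; lia.
Qed.

Lemma ext2_rconsU u : hvalid u -> ext2 (rcons u U) = D.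
Proof.
move=> hv; apply: ext2_lastU; last by rewrite lastU_rcons.
by rewrite hvalid_rcons hv /ext inE eqxx.
Qed.

Lemma words_size n u : u \in words n -> size u = n.
Proof. by rewrite mem_words => /andP[/eqP]. Qed.
Lemma words_hvalid n u : u \in words n -> hvalid u.
Proof. by rewrite mem_words => /andP[]. Qed.

Arguments words_size {n u}.
Arguments words_hvalid {n u}.
Section WordPoly.
Local Open Scope ring_scope.

Definition Pw n : {poly int} := \sum_(u <- words n) 'X^(wmaj u).
Definition Dw n : {poly int} := \sum_(u <- words n) 'X^(wdes u).

Lemma Pw_loc u : hvalid u ->
 \sum_(x <- ext u) \sum_(y <- ext (rcons u x)) 'X^(wmaj (rcons (rcons u x) y)) =
 (1 + 'X) * \sum_(x <- ext u) 'X^(wmaj (rcons u x)) + ('X^((size u).+2) - 'X) * 'X^(wmaj u) :> {poly int}.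
Proof.
move=> hv; rewrite !extE !big_cons !big_nil !addr0 ext2_rconsU //.
rewrite !wmaj_E !minn_rcons !lastU_rcons !size_rcons /= !ext2_neq /=.
set A := \sum_(i <- inn u) i.
case hL: (lastU u) => /=.
  rewrite (ext2_lastU _ hv hL) /=.
  rewrite ?mul1n ?mul0n ?addn0 ?add0n !exprD ?exprS ?expr0; ring.
rewrite ?mul1n ?mul0n ?addn0 ?add0n !exprD ?exprS ?expr0; ring.
Qed.

Lemma Dw_loc u : hvalid u ->
 \sum_(x <- ext u) \sum_(y <- ext (rcons u x)) 'X^(wdes (rcons (rcons u x) y)) =
 2%:R * \sum_(x <- ext u) 'X^(wdes (rcons u x)) + ('X - 1) * 'X^(wdes u) :> {poly int}.
Proof.
move=> hv; rewrite !extE !big_cons !big_nil !addr0 ext2_rconsU //.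
rewrite !wdes_E !sinn_rcons !lastU_rcons /= !ext2_neq /=.
set A := size (inn u).
case hL: (lastU u) => /=.
  rewrite (ext2_lastU _ hv hL) /=.
  rewrite ?addn0 ?add0n ?addn1 ?exprS; ring.
rewrite ?addn0 ?add0n ?addn1 ?exprS; ring.
Qed.

Lemma Pw_rec n : Pw n.+2 = (1 + 'X) * Pw n.+1 + ('X^(n.+2) - 'X) * Pw n.
Proof.
rewrite /Pw !wordsS !big_allpairs_dep [(1 + 'X) * _]mulr_sumr [(_ - 'X) * _]mulr_sumr -big_split /=.
apply: eq_big_seq => u hu.
by rewrite Pw_loc ?(words_hvalid hu) // (words_size hu).
Qed.

Lemma Dw_rec n : Dw n.+2 = 2%:R * Dw n.+1 + ('X - 1) * Dw n.
Proof.
rewrite /Dw !wordsS !big_allpairs_dep [2%:R * _]mulr_sumr [(_ - 1) * _]mulr_sumr -big_split /=.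
apply: eq_big_seq => u hu.
by rewrite Dw_loc ?(words_hvalid hu).
Qed.

End WordPoly.

Set Implicit Arguments. Unset Strict Implicit.

Section Perm.
Variable m : nat.
Implicit Types (s t : {perm 'I_m}) (i j k : 'I_m).

Definition typ s i : step := if i < s i then U else if s i < i then D else F.

Lemma typ_U s i : (typ s i == U) = (i < s i).
Proof. by rewrite /typ; case: (ltngtP i (s i)). Qed.
Lemma typ_D s i : (typ s i == D) = (s i < i).
Proof. by rewrite /typ; case: (ltngtP i (s i)). Qed.
Lemma typ_F s i : (typ s i == F) = (s i == i :> nat).
Proof. by rewrite /typ; case: (ltngtP i (s i)). Qed.

Lemma card_lt c : c <= m -> #|[set v : 'I_m | v < c]| = c.
Proof.
elim: c => [|c IH] hc.
  by apply/eqP; rewrite cards_eq0; apply/eqP/setP => v; rewrite !inE.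
have hc' : c < m := hc.
rewrite (_ : [set v : 'I_m | v < c.+1] = Ordinal hc' |: [set v : 'I_m | v < c]).
  rewrite cardsU1 IH; last exact: ltnW.
  by rewrite inE /= ltnn.
apply/setP => v; by rewrite !inE ltnS leq_eqVlt -val_eqE.
Qed.

Lemma invo s : involution s -> forall i, s (s i) = i.
Proof. by move=> h i; apply/eqP; exact: (forallP h i). Qed.

Lemma we s : avoids321 s -> forall i j, i < j -> j <= s j -> s i <= s j.
Proof.
move=> av i j ij hj; rewrite leqNgt; apply/negP => hji.
case: (pickP (fun k : 'I_m => (j < k) && (s k < s j))) => [k /andP[jk skj]|none].
  move/negP: av; apply; apply/existsP; exists i; apply/existsP; exists j.
  by apply/existsP; exists k; rewrite ij jk hji skj.
have h1 : #|[set k | s k < s j]| = s j.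
  rewrite -[RHS](card_lt (ltnW (ltn_ord (s j)))) -[RHS](card_preimset _ (@perm_inj _ s)).
  by apply: eq_card => k; rewrite !inE.
have h2 : [set k | s k < s j] \subset [set k : 'I_m | k < j] :\ i.
  apply/subsetP => k; rewrite !inE => hk.
  have hkj : k <= j by move: (none k) => /=; rewrite hk andbT => /negbT; rewrite -leqNgt.
  apply/andP; split.
    by apply/negP => /eqP ek; move: hk; rewrite ek ltnNge (ltnW hji).
  rewrite ltn_neqAle hkj andbT; apply/negP => /eqP ekj.
  have ekj' : k = j by apply: val_inj.
  by move: hk; rewrite ekj' ltnn.
have h3 := cardsD1 i [set k : 'I_m | k < j].
rewrite (card_lt (ltnW (ltn_ord j))) inE ij /= in h3.
move: (subset_leq_card h2); rewrite h1 => h4; rewrite h3 in hj.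
by have := leq_trans hj h4; rewrite add1n ltnn.
Qed.

Lemma wd s : involution s -> avoids321 s -> forall i j, i < j -> s i <= i -> s i <= s j.
Proof.
move=> hinv av i j ij hi; rewrite leqNgt; apply/negP => hji.
have hb : s i <= s (s i) by rewrite invo.
by have := we av hji hb; rewrite !invo // leqNgt ij.
Qed.

Lemma descent s (i j : 'I_m) : involution s -> avoids321 s -> j = i.+1 :> nat ->
  (s j < s i) = (typ s i == U) && (typ s j == D).
Proof.
move=> hinv av ej; rewrite typ_U typ_D.
have ij : i < j by rewrite ej.
apply/idP/idP.
  move=> h; apply/andP; split.
    rewrite ltnNge; apply/negP => hi.
    by have := wd hinv av ij hi; rewrite leqNgt h.
  rewrite ltnNge; apply/negP => hj.
  by have := we av ij hj; rewrite leqNgt h.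
case/andP => h1 h2; apply: (leq_trans h2); rewrite ej ltnS in h2 *; exact: h1.
Qed.

Lemma uniq_core s t i : involution s -> avoids321 s -> involution t -> avoids321 t ->
  (forall k, typ s k = typ t k) -> (forall k, k < i -> s k = t k) ->
  i < s i -> s i < t i -> False.
Proof.
move=> is_ as_ it at_ hty agree hsi hst.
set a := s i.
have hDa : typ t a == D by rewrite -hty typ_D /a invo.
rewrite typ_D in hDa.
set c := t a.
have hci : c != i.
  apply/eqP => eci.
  have : t i = a by rewrite -eci /c invo.
  by move=> e; move: hst; rewrite e ltnn.
have hic : i < c.
  rewrite ltn_neqAle eq_sym.
  have -> : (val c != val i) by [].
  rewrite /= leqNgt; apply/negP => hc.
  have := agree c hc; rewrite /c invo // => e.
  by move/eqP: hci; apply; apply: (@perm_inj _ s); rewrite e.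
have htc : c <= t c by rewrite /c invo // ltnW.
by have := we at_ hic htc; rewrite /c invo // leqNgt hst.
Qed.

Lemma uniq321 s t : involution s -> avoids321 s -> involution t -> avoids321 t ->
  (forall k, typ s k = typ t k) -> s = t.
Proof.
move=> is_ as_ it at_ hty.
suff H : forall n (i : 'I_m), i < n -> s i = t i.
  by apply/permP => i; exact: (H i.+1 i (ltnSn _)).
elim=> // n IH i; rewrite ltnS leq_eqVlt => /orP [/eqP ei | ]; last exact: IH.
have agree : forall k : 'I_m, k < i -> s k = t k by move=> k; rewrite ei; exact: IH.
have agree' : forall k : 'I_m, k < i -> t k = s k by move=> k /agree ->.
have hty' : forall k, typ t k = typ s k by move=> k; rewrite hty.
case: (ltngtP i (s i)) => h.
- have hti : i < t i by rewrite -typ_U -hty typ_U.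
  case: (ltngtP (s i) (t i)) => h2.
  + by case: (uniq_core is_ as_ it at_ hty agree h h2).
  + by case: (uniq_core it at_ is_ as_ hty' agree' hti h2).
  + exact: val_inj.
- have e1 : t (s i) = i by rewrite -agree ?invo.
  by apply: (@perm_inj _ t); rewrite e1 invo.
- have : typ t i == F by rewrite -hty typ_F h.
  by rewrite typ_F => /eqP e; apply: val_inj => /=; rewrite e -h.
Qed.

End Perm.


Section Tp.
Variable m : nat.
Implicit Types (s t : {perm 'I_m}).

Definition tpn s (j : nat) : step := if insub j is Some i then typ s i else F.

Lemma tpn_lt s j (h : j < m) : tpn s j = typ s (Ordinal h).
Proof. by rewrite /tpn insubT. Qed.

Lemma tpnE s (i : 'I_m) : tpn s i = typ s i.
Proof. by rewrite /tpn valK. Qed.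

Lemma cnt_card s x c : c <= m ->
  cnt (tpn s) x c = #|[set i : 'I_m | (i < c) && (typ s i == x)]|.
Proof.
elim: c => [|c IH] hc.
  by rewrite cnt0; apply/esym/eqP; rewrite cards_eq0; apply/eqP/setP => v; rewrite !inE.
have hc' : c < m := hc.
rewrite cntS IH; last exact: ltnW.
rewrite (cardsD1 (Ordinal hc') [set i : 'I_m | (i < c.+1) && (typ s i == x)]) inE /= ltnSn /=.
rewrite (tpn_lt s hc') addnC; congr (_ + _).
apply: eq_card => v; rewrite !inE ltnS -val_eqE /=.
by case: (ltngtP v c).
Qed.

Lemma V1p s c : involution s -> c <= m -> cnt (tpn s) D c <= cnt (tpn s) U c.
Proof.
move=> hinv hc; rewrite !cnt_card //.
set A := [set i : 'I_m | (i < c) && (typ s i == D)].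
rewrite -(card_imset A (@perm_inj _ s)).
apply: subset_leq_card; apply/subsetP => y /imsetP [i]; rewrite !inE typ_D => /andP[ic hi] ->.
rewrite typ_U (invo hinv) hi andbT.
exact: ltn_trans hi ic.
Qed.

Lemma V3p s j : involution s -> avoids321 s -> j < m -> tpn s j = F ->
  cnt (tpn s) U j = cnt (tpn s) D j.
Proof.
move=> hinv av hj hF; apply/eqP; rewrite eqn_leq (V1p hinv (ltnW hj)) andbT.
rewrite !(cnt_card _ _ (ltnW hj)).
set J := Ordinal hj.
have hsJ : s J = J.
  by apply: val_inj; apply/eqP; rewrite -typ_F -(tpn_lt s hj) hF.
rewrite -(card_imset _ (@perm_inj _ s)); apply: subset_leq_card.
apply/subsetP => y /imsetP [i]; rewrite !inE typ_U => /andP[ij hi] ->.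
rewrite typ_D (invo hinv) hi andbT.
have hJ : J <= s J by rewrite hsJ.
have := we av (ij : i < J) hJ; rewrite hsJ => h.
rewrite ltn_neqAle h andbT; apply/negP => /eqP e.
have e' : s i = s J by apply: val_inj; rewrite hsJ.
by move: ij; rewrite (perm_inj e') ltnn.
Qed.

End Tp.


Definition fvalid (W : nat -> step) m :=
  [/\ forall c, c <= m -> cnt W D c <= cnt W U c,
      cnt W U m = cnt W D m &
      forall j, j < m -> W j = F -> cnt W U j = cnt W D j].

Section G.
Variables (W : nat -> step) (m : nat).
Hypothesis hv : fvalid W m.

Definition filt x := [seq j <- iota 0 m | W j == x].

Lemma index_filt x j : j < m -> W j = x -> index j (filt x) = cnt W x j.
Proof.
move=> hj hx.
have e : m = j + (m - j.+1).+1 by lia.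
rewrite /filt {1}e iotaD add0n filter_cat index_cat.
have -> : (j \in [seq k <- iota 0 j | W k == x]) = false.
  by rewrite mem_filter mem_iota add0n ltnn !andbF.
by rewrite size_filter /cnt /= hx eqxx /= eqxx addn0.
Qed.

Lemma nth_filt x k : k < cnt W x m ->
  [/\ nth 0 (filt x) k < m, W (nth 0 (filt x) k) = x & cnt W x (nth 0 (filt x) k) = k].
Proof.
move=> hk.
have hs : k < size (filt x) by rewrite size_filter.
have hin : nth 0 (filt x) k \in filt x by exact: mem_nth.
move: (hin); rewrite mem_filter mem_iota add0n => /andP[/eqP hW hy].
split => //.
rewrite -index_filt //; apply: index_uniq => //; exact: filter_uniq (iota_uniq _ _).
Qed.

Definition g j := match W j with
  | U => nth 0 (filt D) (cnt W U j)
  | D => nth 0 (filt U) (cnt W D j)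
  | F => j end.

Lemma gU j : j < m -> W j = U ->
  [/\ g j < m, W (g j) = D, cnt W D (g j) = cnt W U j & j < g j].
Proof.
move=> hj hW; rewrite /g hW.
case: hv => V1 V2 V3.
have hk : cnt W U j < cnt W D m by rewrite -V2; exact: cnt_lt.
case: (nth_filt hk); set y := nth _ _ _ => h1 h2 h3; split => //.
rewrite ltnNge; apply/negP => hyj.
have hyj' : y < j.
  by rewrite ltn_neqAle hyj andbT; apply/eqP => e; move: h2; rewrite e hW.
have := V1 y.+1 (leq_trans hyj' (ltnW hj)).
rewrite !cntS h2 /= h3 => hle.
have := cnt_mono W U _ _ hyj.
lia.
Qed.

Lemma gD j : j < m -> W j = D ->
  [/\ g j < m, W (g j) = U, cnt W U (g j) = cnt W D j & g j < j].
Proof.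
move=> hj hW; rewrite /g hW.
case: hv => V1 V2 V3.
have hk : cnt W D j < cnt W U m by rewrite V2; exact: cnt_lt.
case: (nth_filt hk); set y := nth _ _ _ => h1 h2 h3; split => //.
rewrite ltnNge; apply/negP => hyj.
have hyj' : j < y.
  by rewrite ltn_neqAle hyj andbT; apply/eqP => e; move: h2; rewrite -e hW.
have := V1 j.+1 hj.
rewrite !cntS hW /= => hle.
have := cnt_mono W U _ _ hyj.
lia.
Qed.

Lemma gF j : W j = F -> g j = j.
Proof. by move=> h; rewrite /g h. Qed.

Lemma g_lt j : j < m -> g j < m.
Proof.
move=> hj; case hW: (W j).
- by case: (gU hj hW).
- by case: (gD hj hW).
- by rewrite gF.
Qed.

Lemma g_inv j : j < m -> g (g j) = j.
Proof.
move=> hj; case hW: (W j).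
- case: (gU hj hW) => h1 h2 h3 h4.
  rewrite {1}/g h2 h3 -(index_filt hj hW) nth_index //.
  by rewrite mem_filter mem_iota hW eqxx hj.
- case: (gD hj hW) => h1 h2 h3 h4.
  rewrite {1}/g h2 h3 -(index_filt hj hW) nth_index //.
  by rewrite mem_filter mem_iota hW eqxx hj.
- by rewrite !gF.
Qed.

Lemma g_inc i j : i < j -> j < m -> (W i == D) = (W j == D) -> g i < g j.
Proof.
move=> ij hj hc.
have hi : i < m := ltn_trans ij hj.
case: hv => V1 V2 V3.
case hWi: (W i); case hWj: (W j); rewrite hWi hWj // in hc.
- case: (gU hi hWi) => _ _ e1 _; case: (gU hj hWj) => _ _ e2 _.
  have := cnt_lt _ _ _ _ ij hWi; rewrite -e1 -e2 => hlt.
  rewrite ltnNge; apply/negP => h.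
  by move: hlt; rewrite ltnNge (cnt_mono W D _ _ h).
- case: (gU hi hWi) => _ _ e1 _; rewrite (gF hWj).
  have := cnt_lt _ _ _ _ ij hWi; rewrite (V3 j hj hWj) -e1 => hlt.
  rewrite ltnNge; apply/negP => h.
  by move: hlt; rewrite ltnNge (cnt_mono W D _ _ h).
- case: (gD hi hWi) => _ _ e1 _; case: (gD hj hWj) => _ _ e2 _.
  have := cnt_lt _ _ _ _ ij hWi; rewrite -e1 -e2 => hlt.
  rewrite ltnNge; apply/negP => h.
  by move: hlt; rewrite ltnNge (cnt_mono W U _ _ h).
- case: (gU hj hWj) => _ _ _ h; rewrite gF //; exact: ltn_trans ij h.
- by rewrite !gF.
Qed.

Lemma g_avoid i j k : i < j -> j < k -> k < m -> g j < g i -> g k < g j -> False.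
Proof.
move=> ij jk hk h1 h2.
have hj : j < m := ltn_trans jk hk.
case e1: (W i == D); case e2: (W j == D); case e3: (W k == D).
all: first [ have := g_inc ij hj (etrans e1 (esym e2)); rewrite ltnNge (ltnW h1) //
           | have := g_inc jk hk (etrans e2 (esym e3)); rewrite ltnNge (ltnW h2) //
           | have := g_inc (ltn_trans ij jk) hk (etrans e1 (esym e3)); rewrite ltnNge (ltnW (ltn_trans h2 h1)) // ].
Qed.

Definition gf (i : 'I_m) : 'I_m := insubd i (g i).
Lemma gf_val i : val (gf i) = g i.
Proof. by rewrite val_insubd g_lt. Qed.
Lemma gf_inj : injective gf.
Proof.
move=> a b e; apply: val_inj.
have := congr1 (fun x : 'I_m => g (val x)) e; rewrite /= !gf_val !g_inv //.
Qed.
Definition gp : {perm 'I_m} := perm gf_inj.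
Lemma gpE i : val (gp i) = g i.
Proof. by rewrite permE gf_val. Qed.

Lemma gp_inv : involution gp.
Proof. by apply/forallP => i; apply/eqP/val_inj; rewrite !gpE g_inv. Qed.

Lemma gp_typ i : typ gp i = W i.
Proof.
rewrite /typ !gpE; have hi := ltn_ord i; case hW: (W i).
- by case: (gU hi hW) => _ _ _ ->.
- case: (gD hi hW) => _ _ _ h; rewrite h.
  by rewrite ltnNge (ltnW h).
- by rewrite gF // ltnn.
Qed.

Lemma gp_avoid : avoids321 gp.
Proof.
apply/negP => /existsP [i /existsP [j /existsP [k /and4P[ij jk h1 h2]]]].
rewrite !gpE in h1 h2; exact: (g_avoid ij jk (ltn_ord k) h1 h2).
Qed.

End G.

Section RC.
Variable m : nat.

Definition rcf (s : {perm 'I_m}) (i : 'I_m) := rev_ord (s (rev_ord i)).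
Lemma rcf_inj s : injective (rcf s).
Proof. by move=> a b /rev_ord_inj /perm_inj /rev_ord_inj. Qed.
Definition rc s : {perm 'I_m} := perm (@rcf_inj s).
Lemma rcE s i : rc s i = rev_ord (s (rev_ord i)).
Proof. by rewrite permE. Qed.

Lemma rc_inv s : involution s -> involution (rc s).
Proof.
move=> h; apply/forallP => i; rewrite !rcE rev_ordK (invo h) rev_ordK //.
Qed.

Lemma rc_avoid s : avoids321 s -> avoids321 (rc s).
Proof.
move=> av; apply/negP => /existsP [i /existsP [j /existsP [k /and4P[ij jk h1 h2]]]].
move/negP: av; apply; apply/existsP; exists (rev_ord k); apply/existsP; exists (rev_ord j).
apply/existsP; exists (rev_ord i).
rewrite !rcE /= in h1 h2 *.
have := ltn_ord (s (rev_ord i)); have := ltn_ord (s (rev_ord j)); have := ltn_ord (s (rev_ord k)).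
have := ltn_ord k.
move=> *; apply/and4P; split; lia.
Qed.

Lemma rc_typ s i : typ (rc s) i = flip (typ s (rev_ord i)).
Proof.
rewrite /typ rcE.
set a := s (rev_ord i).
have ha := ltn_ord a; have hi := ltn_ord i.
have hr : val (rev_ord i) = m - i.+1 by [].
have -> : (i < rev_ord a) = (a < rev_ord i) by rewrite /=; apply/idP/idP; lia.
have -> : (rev_ord a < i) = (rev_ord i < a) by rewrite /=; apply/idP/idP; lia.
by case: (ltngtP a (rev_ord i)).
Qed.

End RC.


Lemma flip_eq z x : (flip z == x) = (z == flip x). Proof. by case: z; case: x. Qed.
Lemma flipK : involutive flip. Proof. by case. Qed.

Lemma hvalidP u : hvalid u <->
  (forall c, c <= size u -> cnt (nth F u) D c <= cnt (nth F u) U c) /\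
  (forall j, j < size u -> nth F u j = F -> cnt (nth F u) U j = cnt (nth F u) D j).
Proof.
split.
  case/andP => /allP h1 /allP h3; split.
    by move=> c hc; apply: h1; rewrite mem_iota add0n ltnS hc.
  move=> j hj hF; have := h3 j; rewrite mem_iota add0n hj hF eqxx /= => /(_ isT) /eqP //.
case=> h1 h3; apply/andP; split; apply/allP => c; rewrite mem_iota add0n => /andP[_ hc].
  exact: h1.
case: eqP => //= e; apply/eqP; exact: h3.
Qed.

Section Half.
Variable n : nat.

Definition Wf (u : seq step) (j : nat) : step :=
  if j < n then nth F u j else flip (nth F u (n.*2.-1 - j)).

Lemma Wf_low u x c : c <= n -> cnt (Wf u) x c = cnt (nth F u) x c.
Proof.
move=> hc; apply: cnt_ext => j hj; rewrite /Wf (leq_trans hj hc) //.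
Qed.

Lemma Wf_high u x d : d <= n ->
  cnt (Wf u) x (n + d) + cnt (nth F u) (flip x) (n - d) =
  cnt (nth F u) x n + cnt (nth F u) (flip x) n.
Proof.
elim: d => [|d IH] hd.
  by rewrite addn0 subn0 Wf_low.
rewrite addnS cntS.
have hd' : d < n := hd.
have e : n - d = (n - d.+1).+1 by lia.
move: (IH (ltnW hd')); rewrite e cntS.
have -> : Wf u (n + d) = flip (nth F u (n - d.+1)).
  rewrite /Wf ltnNge leq_addr /=; congr (flip (nth F u _)).
  rewrite -addnn; lia.
rewrite flip_eq; lia.
Qed.

Lemma Wf_valid u : size u = n -> hvalid u -> fvalid (Wf u) n.*2.
Proof.
move=> hs /hvalidP []; rewrite hs => h1 h3.
have HD := Wf_high u D; have HU := Wf_high u U; rewrite /= in HD HU.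
split.
- move=> c hc; case: (leqP c n) => hcn.
    by rewrite !Wf_low //; exact: h1.
  have ed : c = n + (c - n) by lia.
  have hd : c - n <= n by rewrite -addnn in hc; lia.
  have := HD _ hd; have := HU _ hd; rewrite -ed.
  have := h1 (n - (c - n)) (leq_subr _ _).
  lia.
- have hd : n <= n by [].
  have := HD _ hd; have := HU _ hd; rewrite subnn addnn !cnt0.
  lia.
- move=> j hj hF; case: (ltnP j n) => hjn.
    have hjn' := ltnW hjn; rewrite !Wf_low //; apply: h3 => //.
    by move: hF; rewrite /Wf hjn.
  have ed : j = n + (j - n) by lia.
  have hd : j - n < n by rewrite -addnn in hj; lia.
  have hF' : nth F u (n - (j - n).+1) = F.
    have -> : n - (j - n).+1 = n.*2.-1 - j by rewrite -addnn; lia.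
    by move: hF; rewrite /Wf ltnNge hjn /= => /eqP; rewrite flip_eq => /eqP.
  have hlt : n - (j - n).+1 < n by lia.
  have e := h3 _ hlt hF'.
  have e2 : n - (j - n) = (n - (j - n).+1).+1 by lia.
  have := HD _ (ltnW hd); have := HU _ (ltnW hd); rewrite -ed e2 !cntS hF' /=.
  lia.
Qed.

Lemma Wf_sym u (i : 'I_n.*2) : Wf u (rev_ord i) = flip (Wf u i).
Proof.
have hi := ltn_ord i.
have e2 : n.*2 = n + n by rewrite addnn.
rewrite /Wf /=; case: (ltnP i n) => h.
  have -> : (n.*2 - i.+1 < n) = false by apply/negbTE; rewrite -leqNgt; lia.
  congr (flip (nth F u _)); lia.
have -> : (n.*2 - i.+1 < n) by lia.
rewrite flipK; congr (nth F u _); lia.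
Qed.

End Half.


Section IC.
Variable n : nat.

Definition Phi (s : {perm 'I_n.*2}) : seq step := mkseq (tpn s) n.

Lemma centro_typ (s : {perm 'I_n.*2}) i : centrosymmetric s -> typ s (rev_ord i) = flip (typ s i).
Proof.
move=> hc; have e := eqP (forallP hc i).
have hi := ltn_ord i; have hsi := ltn_ord (s i); have hsr := ltn_ord (s (rev_ord i)).
rewrite /typ.
have hr : val (rev_ord i) = n.*2 - i.+1 by [].
have -> : (rev_ord i < s (rev_ord i)) = (s i < i) by rewrite hr; apply/idP/idP; lia.
have -> : (s (rev_ord i) < rev_ord i) = (i < s i) by rewrite hr; apply/idP/idP; lia.
by case: (ltngtP i (s i)).
Qed.

Lemma Phi_words s : s \in ICinv321 n.*2 -> Phi s \in words n.
Proof.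
rewrite inE => /and3P[hc hinv av].
rewrite mem_words size_mkseq eqxx /=; apply/hvalidP; rewrite size_mkseq.
have E : forall x c, c <= n -> cnt (nth F (Phi s)) x c = cnt (tpn s) x c.
  move=> x c hc'; apply: cnt_ext => j hj; rewrite nth_mkseq //; exact: leq_trans hj hc'.
have e2 : n.*2 = n + n by rewrite addnn.
split.
  move=> c hc'; rewrite !E //; apply: V1p => //; lia.
move=> j hj hF; have hj' := ltnW hj; rewrite !E //.
apply: V3p => //; first by lia.
by move: hF; rewrite nth_mkseq.
Qed.

Lemma Phi_inj : {in ICinv321 n.*2 &, injective Phi}.
Proof.
move=> s t; rewrite !inE => /and3P[cs is_ as_] /and3P[ct it at_] e.
apply: uniq321 => // i.
have key : forall k : 'I_n.*2, k < n -> typ s k = typ t k.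
  move=> k hk; rewrite -!tpnE.
  by have := congr1 (nth F ^~ k) e; rewrite /Phi !nth_mkseq.
case: (ltnP i n) => hi; first exact: key.
have e2 : n.*2 = n + n by rewrite addnn.
have hr : rev_ord i < n by rewrite /=; have := ltn_ord i; lia.
by have := centro_typ (rev_ord i) cs; have := centro_typ (rev_ord i) ct; rewrite !rev_ordK => -> ->; rewrite key.
Qed.

Lemma Phi_surj u : u \in words n -> exists2 s, s \in ICinv321 n.*2 & Phi s = u.
Proof.
rewrite mem_words => /andP[/eqP hs hv].
have hf := Wf_valid hs hv.
set s := gp hf.
have is_ : involution s := gp_inv hf.
have as_ : avoids321 s := gp_avoid hf.
have ts : forall i, typ s i = Wf n u i := gp_typ hf.
have ers : rc s = s.
  apply: (uniq321 (rc_inv is_) (rc_avoid as_) is_ as_) => i.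
  by rewrite rc_typ !ts Wf_sym flipK.
exists s.
  rewrite inE is_ as_ !andbT.
  apply/forallP => i; apply/eqP.
  have e : s (rev_ord i) = rev_ord (s i) by rewrite -{1}ers rcE rev_ordK.
  by rewrite e /=; have := ltn_ord (s i); lia.
apply: (@eq_from_nth _ F); rewrite size_mkseq ?hs // => j hj.
have e2 : n.*2 = n + n by rewrite addnn.
have hjm : j < n.*2 by lia.
by rewrite nth_mkseq // (tpn_lt s hjm) ts /Wf /= hj.
Qed.

Lemma DesPlus_wdset s : s \in ICinv321 n.*2 -> DesPlus s = wdset (Phi s).
Proof.
rewrite inE => /and3P[hc hinv av].
rewrite /DesPlus /wdset size_mkseq; apply: eq_in_filter => i; rewrite mem_iota => /andP[h1 h2].
have e2 : n.*2 = n + n by rewrite addnn.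
have ha : i.-1 < n.*2 by lia.
have hb : i < n.*2 by lia.
set A := Ordinal ha; set B := Ordinal hb.
have -> : [exists a : 'I_(n.*2), exists b : 'I_(n.*2),
        [&& (a : nat) == i.-1, (b : nat) == i & s b < s a]] = (s B < s A).
  apply/existsP/idP.
    case=> a /existsP [b /and3P [/eqP ea /eqP eb h]].
    have -> : A = a by apply: val_inj.
    have -> : B = b by apply: val_inj.
    exact: h.
  by move=> h; exists A; apply/existsP; exists B; rewrite /= !eqxx h.
rewrite (descent hinv av (_ : val B = (val A).+1)); last by rewrite /=; lia.
rewrite /dp size_mkseq (nth_mkseq _ _ (_ : i.-1 < n)); last by lia.
rewrite (tpn_lt s ha) -/A.
case: (ltnP i n) => hin.
  rewrite nth_mkseq // (tpn_lt s hb) -/B.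
  by rewrite (_ : (i == n) = false) //; apply/negbTE/eqP; lia.
have ein : i = n by lia.
rewrite ein eqxx /= andbT.
have -> : B = rev_ord A by apply: val_inj; rewrite /=; lia.
by rewrite centro_typ // flip_eq /= andbb.
Qed.

Lemma reidx (G : seq step -> {poly int}) :
  (\sum_(s in ICinv321 n.*2) G (Phi s) = \sum_(u <- words n) G u)%R.
Proof.
transitivity (\sum_(u <- map Phi (enum (ICinv321 n.*2))) G u)%R.
  by rewrite big_map big_enum.
apply: perm_big; apply: uniq_perm.
- rewrite map_inj_in_uniq ?enum_uniq //; move=> a b; rewrite !mem_enum; exact: Phi_inj.
- exact: uniq_words.
- move=> u; apply/mapP/idP.
    by case=> s; rewrite mem_enum => hs ->; exact: Phi_words.
  by case/Phi_surj => s hs <-; exists s; rewrite ?mem_enum.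
Qed.

End IC.

Import GRing.Theory.
Local Open Scope ring_scope.

Theorem mainTheorem7 (n : nat) (hn : (2 <= n)%N) :
  d_poly n = 2%:R * d_poly n.-1 + ('X - 1) * d_poly n.-2 /\
  p_poly n = (1 + 'X) * p_poly n.-1 + ('X^n - 'X) * p_poly n.-2.
Proof.
have dE : forall k, d_poly k = Dw k.
  move=> k; rewrite /d_poly /Dw -(reidx k (fun u => 'X^(wdes u))).
  by apply: eq_bigr => s hs; rewrite /desPlus DesPlus_wdset.
have pE : forall k, p_poly k = Pw k.
  move=> k; rewrite /p_poly /Pw -(reidx k (fun u => 'X^(wmaj u))).
  by apply: eq_bigr => s hs; rewrite /majPlus DesPlus_wdset.
case: n hn => [|[|k]] // _.
rewrite !dE !pE.
split; [exact: Dw_rec | exact: Pw_rec].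
Qed.
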